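(* With notation as in the context: (a) If $v,w\in\mathscr{O}_3$ are $J$ cosets, then $dd(v,w)$ equals the number of positions (out of six) at which the strings $\gamma_1(v)$ and $\gamma_1(w)$ disagree. (b) If $v,w$ are $L$ cosets of different colors but with the same label, then $dd(v,w)=2$. (c) If $v,w$ are distinct $L$ cosets of the same color, then $dd(v,w)=2$, unless $\{\gamma_1(v),\gamma_1(w)\}=\{i,\overline i\}$ for some $1\le i\le 6$, in which case $dd(v,w)=4$. (d) If $v,w$ are $L$ cosets of different colors and different labels, then $dd(v,w)=4$, unless $v=-w$, in which case $dd(v,w)=6$. (e) Let $v=v(i,j)$ with $i\in\{0,1\}$ and $2\le j\le 7$ (an unbarred $L$ coset of either color, with label $j-1$), and let $w$ be a $J$ coset. Then $dd(v,w)=2$ if $\gamma_1(w)$ has a plus sign in position $j-1$, and $dd(v,w)=4$ otherwise. (f) Let $v=-v(i,j)$ with $i\in\{0,1\}$ and $2\le j\le7$ (a barred $L$ coset of either color, with label $\overline{j-1}$), and let $w$ be a $J$ coset. Then $dd(v,w)=2$ if $\gamma_1(w)$ has a minus sign in position $j-1$, and $dd(v,w)=4$ otherwise.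
   Context: There are 56 symbols $\pm v(i,j)$, $0\le i<j\le 7$ (they index the right cosets of a subgroup $G\cong W(E_6)$ in a group $H\cong W(E_7)$; only the symbols are needed here). To each associate the integer vector $\pm v(i,j)=\pm\big(4(\vec e_{i+1}+\vec e_{j+1})-\sum_{k=1}^8\vec e_k\big)\in\mathbb{Z}^8$, and define the discrete distance $dd(v,w)=\frac1{16}\sum_{k=1}^8(v_k-w_k)^2$. Blue $L$ cosets: $\mathscr{O}_1=\{v(0,j),-v(1,j):2\le j\le7\}$; red $L$ cosets: $\mathscr{O}_2=\{v(1,j),-v(0,j):2\le j\le7\}$; $J$ cosets: $\mathscr{O}_3=\{\pm v(0,1)\}\cup\{\pm v(i,j):2\le i<j\le7\}$. Labels: $\gamma_1(v(0,j))=\gamma_1(v(1,j))=j-1$ and $\gamma_1(-v(1,j))=\gamma_1(-v(0,j))=\overline{j-1}$ for $2\le j\le7$; $\gamma_1(v(0,1))={+}{+}{+}{+}{+}{+}$, $\gamma_1(-v(0,1))={-}{-}{-}{-}{-}{-}$; for $2\le i<j\le7$, $\gamma_1(v(i,j))$ is the length-6 sign string with plus signs in positions $i-1$ and $j-1$ and minus signs elsewhere, and $\gamma_1(-v(i,j))$ is its negation (all signs reversed). *)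

(* Defs.v *)
From mathcomp Require Import all_boot all_order all_algebra.
Set Implicit Arguments. Unset Strict Implicit. Unset Printing Implicit Defensive.
Import Order.TTheory GRing.Theory Num.Theory.

(* A symbol  (-1)^neg * v(i,j); coordinates of Z^8 are indexed by 'I_8,
   index k standing for e_{k+1}.  Only symbols with i < j are meaningful. *)
Inductive sym := Sym (neg : bool) (i j : 'I_8).

Definition sneg (s : sym) : bool := let: Sym n _ _ := s in n.
Definition si (s : sym) : nat := let: Sym _ i _ := s in i.
Definition sj (s : sym) : nat := let: Sym _ _ j := s in j.

Definition valid (s : sym) : bool := si s < sj s.

Definition symopp (s : sym) : sym := let: Sym n i j := s in Sym (~~ n) i j.

Local Open Scope ring_scope.

Definition vec (s : sym) (k : 'I_8) : int :=
  let: Sym n i j := s in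
  (if n then -1 else 1) * (4 * ((k == i)%:R + (k == j)%:R) - 1).

Definition dd (v w : sym) : rat :=
  (\sum_(k < 8) ((vec v k - vec w k) ^+ 2)%:~R) / 16%:R.

Local Close Scope ring_scope.

Definition blue (s : sym) : bool :=
  valid s && (2 <= sj s) && ((~~ sneg s && (si s == 0)) || (sneg s && (si s == 1))).
Definition red (s : sym) : bool :=
  valid s && (2 <= sj s) && ((~~ sneg s && (si s == 1)) || (sneg s && (si s == 0))).
Definition Lcoset (s : sym) : bool := blue s || red s.
Definition Jcoset (s : sym) : bool :=
  valid s && (((si s == 0) && (sj s == 1)) || (2 <= si s)).

(* labels: an L label  i  (bar = false) or  \bar i  (bar = true), 1 <= i <= 6;
   or a length-6 sign string, index p : 'I_6 standing for position p+1,
   true meaning '+'. *)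
Inductive label :=
  | LLab (i : nat) (bar : bool)
  | JLab (s : {ffun 'I_6 -> bool}).

(* sign of a sign string at (1-based) position k, 1 <= k <= 6 *)
Definition at_pos (s : {ffun 'I_6 -> bool}) (k : nat) : bool := s (inord k.-1).

Definition gamma1 (s : sym) : label :=
  let: Sym n i j := s in
  if (i == 0 :> nat) && (j == 1 :> nat) then JLab [ffun _ => ~~ n]
  else if 2 <= i then
    JLab [ffun p : 'I_6 => ((p.+1 == i.-1) || (p.+1 == j.-1)) (+) n]
  else LLab j.-1 n.

(* Main.v *)
Require Import Defs.
From mathcomp Require Import all_boot all_order all_algebra.
Import GRing.Theory Num.Theory.
Local Open Scope ring_scope.

Definition o8 : seq 'I_8 :=
  [:: @Ordinal 8 0 isT; @Ordinal 8 1 isT; @Ordinal 8 2 isT; @Ordinal 8 3 isT;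
      @Ordinal 8 4 isT; @Ordinal 8 5 isT; @Ordinal 8 6 isT; @Ordinal 8 7 isT].
Definition o6 : seq 'I_6 :=
  [:: @Ordinal 6 0 isT; @Ordinal 6 1 isT; @Ordinal 6 2 isT; @Ordinal 6 3 isT;
      @Ordinal 6 4 isT; @Ordinal 6 5 isT].

Lemma enum8 : Finite.enum 'I_8 = o8.
Proof. apply: (inj_map val_inj); by rewrite -enumT val_enum_ord. Qed.
Lemma enum6 : Finite.enum 'I_6 = o6.
Proof. apply: (inj_map val_inj); by rewrite -enumT val_enum_ord. Qed.

Lemma mem8 (i : 'I_8) : i \in o8.
Proof. by rewrite -enum8 -enumT mem_enum. Qed.

Definition Sc (v w : sym) : int :=
  foldr (fun k acc => (vec v k - vec w k)^+2 + acc) 0 o8.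

Lemma SE v w : \sum_(k < 8) (vec v k - vec w k)^+2 = Sc v w.
Proof. rewrite unlock /index_enum unlock enum8. reflexivity. Qed.

Lemma ddK v w (k : nat) : Sc v w = (16 * k)%N%:Z -> dd v w = k%:R.
Proof.
move=> H; rewrite /dd -(rmorph_sum (intr : int -> rat)) SE H.
rewrite /= -pmulrn natrM mulrC mulKf //.
Qed.

Definition allsym (P : sym -> bool) : bool :=
  all (fun n => all (fun i => all (fun j => P (Sym n i j)) o8) o8) [:: false; true].

Lemma allsymP P : allsym P -> forall s, P s.
Proof.
move=> H [n i j]; move/allP: H => /(_ n); case: n => /(_ isT).
- by move/allP/(_ i (mem8 i))/allP/(_ j (mem8 j)).
- by move/allP/(_ i (mem8 i))/allP/(_ j (mem8 j)).
Qed.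

Definition jfn (w : sym) (p : nat) : bool :=
  let: Sym n i j := w in
  if (i == 0 :> nat) && (j == 1 :> nat) then ~~ n
  else ((p.+1 == i.-1) || (p.+1 == j.-1)) (+) n.

Lemma gJ w sw : Jcoset w -> gamma1 w = JLab sw -> forall p : 'I_6, sw p = jfn w p.
Proof.
case: w => n i j /= _; case: ifP => [_ [<-] p|_]; first by rewrite ffunE.
case: ifP => // _ [<-] p; by rewrite ffunE.
Qed.

Lemma gL v : Lcoset v -> gamma1 v = LLab (sj v).-1 (sneg v).
Proof.
case: v => n i j; rewrite /Lcoset /blue /red /valid /=.
case: i => [[|[|i]] Hi] /=; case: j => [[|[|j]] Hj] //=; rewrite ?andbF //.
Qed.

Definition symeqb (v w : sym) : bool :=
  let: Sym n i j := v in let: Sym n' i' j' := w in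
  [&& n == n', i == i' & j == j'].

Lemma symeqbP v w : reflect (v = w) (symeqb v w).
Proof.
case: v w => n i j [n' i' j'] /=.
apply: (iffP idP) => [/and3P [/eqP-> /eqP-> /eqP->] //|[-> -> ->]].
by rewrite !eqxx.
Qed.

Definition PA (v w : sym) : bool := (
  Jcoset v ==> Jcoset w ==> (Sc v w == (16 * count (fun p : 'I_6 => jfn v p != jfn w p) o6)%N%:Z)).
Definition checkA := allsym (fun v => allsym (fun w => PA v w)).
Lemma checkA_ok : checkA. Proof. vm_compute. reflexivity. Qed.

Definition diffcol v w := (blue v && red w) || (red v && blue w).
Definition samecol v w := (blue v && blue w) || (red v && red w).
Definition labeq v w := ((sj v).-1 == (sj w).-1) && (sneg v == sneg w).
Definition cc v w := [&& ((sj v).-1 == (sj w).-1), (sneg v != sneg w) & (1 <= (sj v).-1 <= 6)%N].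

Definition PB (v w : sym) : bool := (
  diffcol v w ==> labeq v w ==> (Sc v w == (16 * 2)%N%:Z)).
Definition checkB := allsym (fun v => allsym (fun w => PB v w)).
Lemma checkB_ok : checkB. Proof. vm_compute. reflexivity. Qed.

Definition PC (v w : sym) : bool := (
  samecol v w ==> ~~ symeqb v w ==> (Sc v w == (16 * (if cc v w then 4 else 2))%N%:Z)).
Definition checkC := allsym (fun v => allsym (fun w => PC v w)).
Lemma checkC_ok : checkC. Proof. vm_compute. reflexivity. Qed.

Definition PD (v w : sym) : bool := (
  diffcol v w ==> ~~ labeq v w ==>
  (Sc v w == (16 * (if symeqb v (symopp w) then 6 else 4))%N%:Z)).
Definition checkD := allsym (fun v => allsym (fun w => PD v w)).
Lemma checkD_ok : checkD. Proof. vm_compute. reflexivity. Qed.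

Definition PE (v w : sym) : bool := (
  (~~ sneg v) ==> (si v <= 1)%N ==> (2 <= sj v)%N ==> Jcoset w ==>
  (Sc v w == (16 * (if jfn w (sj v).-2 then 2 else 4))%N%:Z)).
Definition checkE := allsym (fun v => allsym (fun w => PE v w)).
Lemma checkE_ok : checkE. Proof. vm_compute. reflexivity. Qed.

Definition PF (v w : sym) : bool := (
  (sneg v) ==> (si v <= 1)%N ==> (2 <= sj v)%N ==> Jcoset w ==>
  (Sc v w == (16 * (if ~~ jfn w (sj v).-2 then 2 else 4))%N%:Z)).
Definition checkF := allsym (fun v => allsym (fun w => PF v w)).
Lemma checkF_ok : checkF. Proof. vm_compute. reflexivity. Qed.

Lemma pair_ok (P : sym -> sym -> bool) :
  allsym (fun v => allsym (fun w => P v w)) -> forall v w, P v w.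
Proof. by move=> H v w; exact: (allsymP _ (allsymP _ H v) w). Qed.

Lemma diffL v w : diffcol v w -> Lcoset v /\ Lcoset w.
Proof. by rewrite /diffcol /Lcoset => /orP [/andP [-> ->]|/andP [-> ->]]; rewrite ?orbT. Qed.
Lemma sameL v w : samecol v w -> Lcoset v /\ Lcoset w.
Proof. by rewrite /samecol /Lcoset => /orP [/andP [-> ->]|/andP [-> ->]]; rewrite ?orbT. Qed.

Lemma labeqP v w : Lcoset v -> Lcoset w -> (gamma1 v = gamma1 w <-> labeq v w).
Proof.
move=> Lv Lw; rewrite (gL _ Lv) (gL _ Lw) /labeq; split.
- by case=> -> ->; rewrite !eqxx.
- by case/andP => /eqP -> /eqP ->.
Qed.

Lemma ccP v w : Lcoset v -> Lcoset w ->
  ((exists i : nat, (1 <= i <= 6)%N /\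
        ((gamma1 v = LLab i false /\ gamma1 w = LLab i true) \/
         (gamma1 v = LLab i true /\ gamma1 w = LLab i false))) <-> cc v w).
Proof.
move=> Lv Lw; rewrite (gL _ Lv) (gL _ Lw) /cc; split.
- case=> i [Hi [[[-> ->] [-> ->]]|[[-> ->] [-> ->]]]]; by rewrite eqxx Hi.
- case/and3P => /eqP E Hn Hi; exists (sj v).-1; split => //.
  rewrite -E; move: Hn; case: (sneg v); case: (sneg w) => //= _; by [right|left].
Qed.

Lemma cardC (sv sw : {ffun 'I_6 -> bool}) :
  #|[pred p | sv p != sw p]| = count (fun p => sv p != sw p) o6.
Proof. rewrite -enum6; rewrite cardE /enum_mem size_filter unlock. reflexivity. Qed.

Theorem proposition6p3 :
  (* (a) *)
  (forall (v w : sym) (sv sw : {ffun 'I_6 -> bool}),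
     Jcoset v -> Jcoset w -> gamma1 v = JLab sv -> gamma1 w = JLab sw ->
     dd v w = (#|[pred p | sv p != sw p]|)%:R) /\
  (* (b) *)
  (forall v w : sym,
     (blue v && red w) || (red v && blue w) -> gamma1 v = gamma1 w ->
     dd v w = 2%:R) /\
  (* (c) *)
  (forall v w : sym,
     (blue v && blue w) || (red v && red w) -> v <> w ->
     ((exists i : nat, (1 <= i <= 6)%N /\
        ((gamma1 v = LLab i false /\ gamma1 w = LLab i true) \/
         (gamma1 v = LLab i true /\ gamma1 w = LLab i false))) ->
       dd v w = 4%:R) /\
     (~ (exists i : nat, (1 <= i <= 6)%N /\
        ((gamma1 v = LLab i false /\ gamma1 w = LLab i true) \/
         (gamma1 v = LLab i true /\ gamma1 w = LLab i false))) ->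
       dd v w = 2%:R)) /\
  (* (d) *)
  (forall v w : sym,
     (blue v && red w) || (red v && blue w) -> gamma1 v <> gamma1 w ->
     (v = symopp w -> dd v w = 6%:R) /\ (v <> symopp w -> dd v w = 4%:R)) /\
  (* (e) *)
  (forall (i j : 'I_8) (w : sym) (sw : {ffun 'I_6 -> bool}),
     (i <= 1)%N -> (2 <= j)%N -> Jcoset w -> gamma1 w = JLab sw ->
     dd (Sym false i j) w = (if at_pos sw j.-1 then 2%:R else 4%:R)) /\
  (* (f) *)
  (forall (i j : 'I_8) (w : sym) (sw : {ffun 'I_6 -> bool}),
     (i <= 1)%N -> (2 <= j)%N -> Jcoset w -> gamma1 w = JLab sw ->
     dd (Sym true i j) w = (if ~~ at_pos sw j.-1 then 2%:R else 4%:R)).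
Proof.
split.
  move=> v w sv sw Jv Jw gv gw; apply: ddK; rewrite cardC.
  rewrite (eq_count (a2 := fun p : 'I_6 => jfn v p != jfn w p)); last first.
    by move=> p /=; rewrite (gJ _ _ Jv gv) (gJ _ _ Jw gw).
  by move: (pair_ok PA checkA_ok v w); rewrite /PA Jv Jw /= => /eqP.
split.
  move=> v w D E; apply: ddK.
  have [Lv Lw] := diffL _ _ D.
  move/(labeqP _ _ Lv Lw): E => E.
  by move: (pair_ok PB checkB_ok v w); rewrite /PB /diffcol D E /= => /eqP.
split.
  move=> v w D N; have [Lv Lw] := sameL _ _ D.
  have N' : symeqb v w = false by apply/negbTE/negP => /symeqbP.
  move: (pair_ok PC checkC_ok v w); rewrite /PC /samecol D N' /= => /eqP H.
  split.
    by move/(ccP _ _ Lv Lw) => C; apply: ddK; rewrite H C.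
  move=> C; apply: ddK; rewrite H.
  case: ifP => // C'; case: C; exact/(ccP _ _ Lv Lw).
split.
  move=> v w D E; have [Lv Lw] := diffL _ _ D.
  have E' : labeq v w = false by apply/negbTE/negP => /(labeqP _ _ Lv Lw).
  move: (pair_ok PD checkD_ok v w); rewrite /PD /diffcol D E' /= => /eqP H.
  split.
    by move=> O; apply: ddK; rewrite H; move/symeqbP: O => ->.
  by move=> O; apply: ddK; rewrite H; case: symeqbP.
have atE w sw (j : 'I_8) : Jcoset w -> gamma1 w = JLab sw -> (2 <= j)%N ->
    at_pos sw j.-1 = jfn w j.-2.
  move=> Jw gw j2; rewrite /at_pos (gJ _ _ Jw gw) inordK //.
  by case: j j2 => [[|[|j]] Hj] //= _; rewrite -ltnS -ltnS.
split.
  move=> i j w sw i1 j2 Jw gw; rewrite (atE w sw j Jw gw j2).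
  move: (pair_ok PE checkE_ok (Sym false i j) w); rewrite /PE /= i1 j2 Jw /= => /eqP H.
  by case: ifP H => _ /(ddK _ _ _).
move=> i j w sw i1 j2 Jw gw; rewrite (atE w sw j Jw gw j2).
move: (pair_ok PF checkF_ok (Sym true i j) w); rewrite /PF /= i1 j2 Jw /= => /eqP H.
by case: ifP H => _ /(ddK _ _ _).
Qed.
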